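(* Let $K\ge2$ and consider a rotation-invariant random point process on the discrete circle with holes $1,\dots,K$ (clockwise), with $\mathbb P(\text{particle at hole }K)>0$. Let $W$ be the smallest index $l\in\{1,\dots,K\}$ such that hole $l$ is occupied, $g(L)=\mathbb P(W=L)$, and $\Delta g(L)=g(L+1)-g(L)$ with $g(K+1)=0$. Then for every $L\in\{1,\dots,K\}$, $$-\Delta g(L)=\mathbb P\big(\text{there is a particle at hole }K\text{ and the clockwise distance from hole }K\text{ to the next occupied hole equals }L\big).$$
   Context: Adjacent holes are at distance 1; if hole $K$ is the only occupied hole, the distance to the next occupied hole is $K$. *)

(* Defs.v *)
From mathcomp Require Import all_boot all_order all_algebra.
Set Implicit Arguments. Unset Strict Implicit. Unset Printing Implicit Defensive.
Import Order.TTheory GRing.Theory Num.Theory.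
Local Open Scope ring_scope.

(* Holes 1,...,K of the discrete circle (clockwise) are encoded by the
   0-based indices 0,...,K-1 of 'I_K : hole l <-> index l-1.
   A configuration is the set of occupied indices. Clockwise step = ordS. *)
Definition config (K : nat) := {set 'I_K}.

Definition occ K (c : config K) (j : nat) : bool :=
  [exists i : 'I_K, (val i == j) && (i \in c)].

Definition rot1 K (c : config K) : config K := [set ordS i | i in c].

Definition is_pmf (R : realFieldType) K (P : {ffun config K -> R}) : Prop :=
  (forall c, 0 <= P c) /\ \sum_(c : config K) P c = 1.

Definition rot_invariant (R : realFieldType) K (P : {ffun config K -> R}) : Prop :=
  forall c, P (rot1 c) = P c.

Definition Prob (R : realFieldType) K (P : {ffun config K -> R})
  (E : config K -> bool) : R := \sum_(c : config K | E c) P c.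

Definition W_is K (c : config K) (L : nat) : bool :=
  occ c L.-1 && all (fun l => ~~ occ c l.-1) (iota 1 L.-1).

Definition g (R : realFieldType) K (P : {ffun config K -> R}) (L : nat) : R :=
  if (L == K.+1)%N then 0 else Prob P (fun c => W_is c L).

(* clockwise distance from index i to the next occupied hole equals d:
   1 <= d <= K, index (i+d) mod K is occupied, and indices (i+d') mod K
   for 1 <= d' < d are empty. (If i is the only occupied hole, d = K.) *)
Definition next_dist K (c : config K) (i : nat) (d : nat) : bool :=
  [&& (1 <= d <= K)%N, occ c ((i + d) %% K)
    & all (fun d' => ~~ occ c ((i + d') %% K)) (iota 1 d.-1)].

(* Main.v *)
Require Import Defs.
From mathcomp Require Import all_boot all_order all_algebra.
From mathcomp Require Import zify.
Set Implicit Arguments. Unset Strict Implicit.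
Import Order.TTheory GRing.Theory Num.Theory.
Local Open Scope ring_scope.

Lemma occE K (c : config K) (i : 'I_K) : occ c i = (i \in c).
Proof.
apply/existsP/idP => [[j /andP[/eqP/val_inj -> //]]|H].
by exists i; rewrite eqxx H.
Qed.

Lemma occ_ge K (c : config K) j : (K <= j)%N -> occ c j = false.
Proof.
move=> H; apply/existsP => -[i /andP[/eqP Hi _]].
have := ltn_ord i; rewrite Hi; lia.
Qed.

Lemma occ_rotS K (c : config K) (i : 'I_K) : occ (rot1 c) (ordS i) = occ c i.
Proof. by rewrite !occE /rot1 mem_imset //; apply: ordS_inj. Qed.

Lemma occ_rot K (c : config K) j : (j < K)%N ->
  occ (rot1 c) j = occ c (if j is 0 then K.-1 else j.-1).
Proof.
move=> hj.
case: j hj => [|j] hj.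
  have hk : (K.-1 < K)%N by lia.
  have := occ_rotS c (Ordinal hk).
  have -> : val (ordS (Ordinal hk)) = 0%N by rewrite /= prednK ?modnn //; lia.
  by [].
have hk : (j < K)%N by lia.
have := occ_rotS c (Ordinal hk).
have -> : val (ordS (Ordinal hk)) = j.+1 by rewrite /= modn_small.
by [].
Qed.

Lemma allIP (p : pred nat) m n :
  reflect (forall j, (m <= j < m + n)%N -> p j) (all p (iota m n)).
Proof.
apply: (iffP allP) => H j; first by move=> hj; apply: H; rewrite mem_iota.
by rewrite mem_iota => hj; apply: H.
Qed.

Lemma rot1_inj K : injective (@rot1 K).
Proof. exact: (imset_inj (@ordS_inj K)). Qed.

Lemma Prob_rot (R : realFieldType) K (P : {ffun config K -> R}) E :
  rot_invariant P -> Prob P E = Prob P (fun c => E (rot1 c)).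
Proof.
move=> Hr; rewrite /Prob (reindex_inj (@rot1_inj K)) /=.
by apply: eq_bigr => c _; rewrite Hr.
Qed.

Lemma Prob_split (R : realFieldType) K (P : {ffun config K -> R}) E Q :
  Prob P E = Prob P (fun c => E c && Q c) + Prob P (fun c => E c && ~~ Q c).
Proof. by rewrite /Prob (bigID Q) /=. Qed.

Lemma W_rot K (c : config K) L : (1 <= L < K)%N ->
  W_is (rot1 c) L.+1 = W_is c L && ~~ occ c K.-1.
Proof.
move=> hL; rewrite /W_is /= occ_rot; last by lia.
case: L hL => [|L] hL //=.
rewrite occ_rot; last by lia.
rewrite /= -andbA; congr (_ && _); rewrite andbC; congr (_ && _).
apply/allIP/allIP => H j hj.
  have := H j.+1 ltac:(lia).
  by rewrite /= occ_rot; [case: j hj|lia].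
have := H j.-1 ltac:(lia).
rewrite occ_rot; last by lia.
by case: j hj => [|[|j]] hj //=; lia.
Qed.

Lemma nd_W K (c : config K) L : (2 <= K)%N -> (1 <= L <= K)%N ->
  next_dist c K.-1 L = W_is c L.
Proof.
move=> hK hL; rewrite /next_dist /W_is hL /=.
have -> : ((K.-1 + L) %% K = L.-1)%N.
  have -> : (K.-1 + L = K + L.-1)%N by lia.
  by rewrite modnDl modn_small //; lia.
congr (_ && _).
apply/allIP/allIP => H j hj; have := H j hj.
  have -> : ((K.-1 + j) %% K = j.-1)%N; last by [].
  have -> : (K.-1 + j = K + j.-1)%N by lia.
  by rewrite modnDl modn_small //; lia.
have -> : ((K.-1 + j) %% K = j.-1)%N; last by [].
have -> : (K.-1 + j = K + j.-1)%N by lia.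
by rewrite modnDl modn_small //; lia.
Qed.

Theorem lemma4p3 (R : realFieldType) (K : nat) (P : {ffun config K -> R}) :
  (2 <= K)%N ->
  is_pmf P ->
  rot_invariant P ->
  0 < Prob P (fun c => occ c K.-1) ->
  forall L : nat, (1 <= L <= K)%N ->
    - (g P L.+1 - g P L) =
    Prob P (fun c => occ c K.-1 && next_dist c K.-1 L).
Proof.
move=> hK _ Hr _ L hL.
have -> : Prob P (fun c => occ c K.-1 && next_dist c K.-1 L)
          = Prob P (fun c => W_is c L && occ c K.-1).
  by apply: eq_bigl => c; rewrite nd_W // andbC.
have hgL : g P L = Prob P (fun c => W_is c L).
  by rewrite /g; case: eqP => //; lia.
rewrite hgL (Prob_split P _ (fun c => occ c K.-1)).
have -> : g P L.+1 = Prob P (fun c => W_is c L && ~~ occ c K.-1).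
  case: (ltnP L K) => hLK.
    rewrite /g; case: eqP => [|_]; first lia.
    rewrite (Prob_rot _ Hr); apply: eq_bigl => c.
    by rewrite W_rot //; lia.
  have -> : L = K by lia.
  rewrite /g eqxx /Prob big_pred0 // => c.
  rewrite /W_is; case: (occ c K.-1); by rewrite ?andbF.
by rewrite opprB addrK.
Qed.
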